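(* Let $d\ge 1$ and $1\le n\le m$ be integers, and let $P_m$ denote the set of all $m$-outcome POVMs $\mathcal{M}=\{M_b\}_{b=1}^m$ on $\mathbb{C}^d$. Let $F\subseteq P_m$ be the set of $m$-outcome POVMs that can be simulated by $n$-outcome POVMs, i.e. those $\mathcal{O}=\{O_b\}$ of the form $O_b=\sum_{a,x}p(x)\,p(b|a,x)\,Q_{a|x}$, where for each $x$ the family $\{Q_{a|x}\}_{a=1}^n$ is an $n$-outcome POVM, $p(x)$ is a probability distribution and $p(b|a,x)$ are conditional probabilities. For $\mathcal{M}\in P_m$ define the robustness $$R_F(\mathcal{M})=\min\Big\{t\ge 0 \;\Big|\; \exists\,\mathcal{N}=\{N_b\}\in P_m:\ \Big\{\tfrac{M_b+tN_b}{1+t}\Big\}_b\in F\Big\}.$$ Then $$\max_{\mathcal{M}\in P_m}\big(1+R_F(\mathcal{M})\big)\le \frac{m}{n},$$ and this inequality holds with equality when $d\ge m$.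
   Context: A POVM with $k$ outcomes on $\mathbb{C}^d$ is a family of $k$ positive semidefinite operators summing to the identity. *)

(* Defs.v *)
(* Complex numbers are R[i] = complex R over an arbitrary
   real closed field R (for R = the reals this is the usual C). *)
From HB Require Import structures.
From mathcomp Require Import all_boot all_order all_algebra.
From mathcomp Require Import complex.
Set Implicit Arguments. Unset Strict Implicit. Unset Printing Implicit Defensive.
Import Order.TTheory GRing.Theory Num.Theory.
Local Open Scope ring_scope.

Definition adjmx (R : rcfType) (p q : nat) (A : 'M[R[i]]_(p, q)) : 'M[R[i]]_(q, p) :=
  (map_mx Num.conj A)^T.

Definition psd (R : rcfType) (d : nat) (A : 'M[R[i]]_d) : Prop :=
  adjmx A = A /\ forall v : 'cV[R[i]]_d, 0 <= (adjmx v *m A *m v) 0 0.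

Definition POVM (R : rcfType) (d k : nat) (M : 'I_k -> 'M[R[i]]_d) : Prop :=
  (forall b, psd (M b)) /\ \sum_(b < k) M b = 1%:M.

Definition simulable (R : rcfType) (d n m : nat) (O : 'I_m -> 'M[R[i]]_d) : Prop :=
  exists (K : nat) (p : 'I_K -> R) (Q : 'I_K -> 'I_n -> 'M[R[i]]_d)
         (q : 'I_K -> 'I_n -> 'I_m -> R),
    [/\ (forall x, 0 <= p x), \sum_(x < K) p x = 1,
        (forall x, POVM (Q x)) /\
        (forall x a b, 0 <= q x a b),
        (forall x a, \sum_(b < m) q x a b = 1) &
        (forall b, O b = \sum_(x < K) \sum_(a < n) ((p x * q x a b)%:C)%C *: Q x a)].

Definition robust_feasible (R : rcfType) (d n m : nat) (M : 'I_m -> 'M[R[i]]_d)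
    (t : R) : Prop :=
  0 <= t /\ exists N : 'I_m -> 'M[R[i]]_d,
    POVM N /\ simulable n (fun b => ((1 + t)^-1)%:C%C *: (M b + t%:C%C *: N b)).

(* Main.v *)
Require Import Defs.
From HB Require Import structures.
From mathcomp Require Import all_boot all_order all_algebra.
From mathcomp Require Import complex ring.
Import Order.TTheory GRing.Theory Num.Theory.
Local Open Scope ring_scope.

Lemma adjmxD (R : rcfType) (d : nat) (A B : 'M[R[i]]_d) :
  adjmx (A + B) = adjmx A + adjmx B.
Proof. by apply/matrixP=> i j; rewrite !mxE rmorphD. Qed.

Lemma adjmxZ (R : rcfType) (d : nat) (z : R[i]) (A : 'M[R[i]]_d) :
  0 <= z -> adjmx (z *: A) = z *: adjmx A.
Proof.
move=> z0; have zr : z \is Num.real by rewrite realE z0.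
by apply/matrixP=> i j; rewrite !mxE -{2}(conj_Creal zr) rmorphM.
Qed.

Lemma psd0 (R : rcfType) (d : nat) : psd (0 : 'M[R[i]]_d).
Proof.
split; first by apply/matrixP=> i j; rewrite !mxE rmorph0.
by move=> v; rewrite mulmx0 mul0mx mxE.
Qed.

Lemma psdD (R : rcfType) (d : nat) (A B : 'M[R[i]]_d) :
  psd A -> psd B -> psd (A + B).
Proof.
move=> [hA pA] [hB pB]; split; first by rewrite adjmxD hA hB.
by move=> v; rewrite mulmxDr mulmxDl mxE addr_ge0.
Qed.

Lemma psdZ (R : rcfType) (d : nat) (z : R[i]) (A : 'M[R[i]]_d) :
  0 <= z -> psd A -> psd (z *: A).
Proof.
move=> z0 [hA pA]; split; first by rewrite adjmxZ // hA.
by move=> v; rewrite -scalemxAr -scalemxAl mxE mulr_ge0.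
Qed.

Lemma psd_sum (R : rcfType) (d : nat) (I : Type) (r : seq I) (P : pred I)
  (F : I -> 'M[R[i]]_d) :
  (forall i, P i -> psd (F i)) -> psd (\sum_(i <- r | P i) F i).
Proof.
move=> h; elim/big_rec: _ => [|i x Pi px]; first exact: psd0.
by apply: psdD => //; apply: h.
Qed.

Lemma psd_diag (R : rcfType) (d : nat) (A : 'M[R[i]]_d) (i : 'I_d) :
  psd A -> 0 <= A i i.
Proof.
move=> [_ pA]; have := pA (delta_mx i 0).
have -> : adjmx (delta_mx i (0 : 'I_1)) = delta_mx 0 i :> 'M[R[i]]_(1, d).
  by apply/matrixP=> a b; rewrite !mxE rmorph_nat; case: eqP; case: eqP.
by rewrite -rowE -colE !mxE.
Qed.

Lemma povm_le1 (R : rcfType) (d n : nat) (Q : 'I_n -> 'M[R[i]]_d) a i :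
  POVM Q -> Q a i i <= 1.
Proof.
move=> [Qp Qs]; have := congr1 (fun A : 'M_d => A i i) Qs.
rewrite summxE mxE eqxx mulr1n => <-.
rewrite (bigD1 a) //= lerDl sumr_ge0 // => c _; exact: psd_diag.
Qed.

Lemma part2 (R : rcfType) (d n m' : nat) : (1 <= n)%N -> (m'.+1 <= d)%N ->
  exists M : 'I_m'.+1 -> 'M[R[i]]_d, POVM M /\
    forall t : R, robust_feasible n M t -> m'.+1%:R / n%:R <= 1 + t.
Proof.
move=> n1 hm.
pose f (i : 'I_d) : 'I_m'.+1 := inord (minn i m').
exists (fun b => diag_mx (\row_i ((f i == b)%:R : R[i]))).
split.
  split.
    move=> b; split.
      apply/matrixP=> i j; rewrite !mxE rmorphMn rmorph_nat.
      by case: (eqVneq i j) => [->|ij]; rewrite ?eqxx // eq_sym (negPf ij).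
    move=> v; rewrite mul_mx_diag mxE; apply: sumr_ge0 => j _.
    rewrite !mxE mulrC mulrA mulrC; apply: mulr_ge0; first exact: ler0n.
    exact: mul_conjC_ge0.
  apply/matrixP=> i j; rewrite summxE [RHS]mxE.
  under eq_bigr do rewrite !mxE.
  rewrite sumrMnl; congr (_ *+ _).
  rewrite (bigD1 (f i)) //= eqxx big1 ?addr0 // => b nb.
  by rewrite eq_sym (negPf nb).
move=> t [t0 [N [[Np Ns] [K [p [Q [q [p0 ps [QP q0] qs Oeq]]]]]]]].
pose w (b : 'I_m'.+1) : 'I_d := widen_ord hm b.
have fw b : f (w b) = b.
  have hb : (b <= m')%N by rewrite -ltnS.
  by apply/val_inj; rewrite /f /= (minn_idPl hb) inordK.
have t1 : 0 < 1 + t by rewrite ltr_pwDl.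
have low b : ((1 + t)^-1)%:C%C <= 
   (((1 + t)^-1)%:C%C *: (diag_mx (\row_i ((f i == b)%:R : R[i])) + t%:C%C *: N b)) (w b) (w b).
  rewrite !mxE fw !eqxx /= mulr1n.
  rewrite -{1}[_%:C%C]mulr1; apply: ler_wpM2l; first by rewrite ler0c invr_ge0 ltW.
  by rewrite lerDl mulr_ge0 ?ler0c // psd_diag.
have up : \sum_b (((1 + t)^-1)%:C%C *: (diag_mx (\row_i ((f i == b)%:R : R[i])) + t%:C%C *: N b)) (w b) (w b) <= n%:R.
  under eq_bigr do rewrite Oeq summxE.
  apply: (@le_trans _ _ ((\sum_b \sum_x \sum_a (p x * q x a b))%:C%C)).
    rewrite !rmorph_sum.
    apply: ler_sum => b _; rewrite rmorph_sum; apply: ler_sum => x _; rewrite rmorph_sum summxE; apply: ler_sum => a _.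
    rewrite mxE -[X in _ <= X]mulr1; apply: ler_wpM2l; first by rewrite ler0c mulr_ge0.
    exact: povm_le1.
  have -> : (n%:R : R[i]) = (n%:R : R)%:C%C by rewrite rmorph_nat.
  rewrite -subr_ge0 -rmorphB ler0c subr_ge0 exchange_big /=.
  under eq_bigr do rewrite exchange_big /=.
  under eq_bigr do under eq_bigr do rewrite -mulr_sumr qs mulr1.
  under eq_bigr do rewrite sumr_const card_ord.
  by rewrite sumrMnl ps.
have := le_trans (ler_sum _ (fun b _ => low b)) up.
rewrite sumr_const card_ord -[_ *+ m'.+1]mulr_natl.
have -> : (m'.+1%:R : R[i]) = (m'.+1%:R : R)%:C%C by rewrite rmorph_nat.
have -> : (n%:R : R[i]) = (n%:R : R)%:C%C by rewrite rmorph_nat.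
rewrite -(rmorphM (real_complex R)) => h.
have h2 : 0 <= ((n%:R - m'.+1%:R * (1 + t)^-1 : R)%:C%C : R[i]) by rewrite rmorphB subr_ge0.
rewrite ler0c subr_ge0 ler_pdivrMr // in h2.
rewrite ler_pdivrMr ?ltr0n // mulrC //.
Qed.

Lemma lerC (R : rcfType) (x y : R) : x <= y -> (x%:C%C : R[i]) <= y%:C%C.
Proof. by rewrite lecR. Qed.

Lemma psd_comb (R : rcfType) (d k : nat) (M : 'I_k -> 'M[R[i]]_d)
  (w : 'I_k -> R[i]) (b : 'I_k) (r : R[i]) :
  (forall c, psd (M c)) -> (forall c, 0 <= w c) -> r <= w b ->
  psd (\sum_c w c *: M c - r *: M b).
Proof.
move=> Mp w0 rb; rewrite (bigD1 b) //= addrAC -scalerBl.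
apply: psdD; first by apply: psdZ => //; rewrite subr_ge0.
by apply: psd_sum => c _; apply: psdZ.
Qed.

Lemma part1 (R : rcfType) (d n' m' : nat) : (n'.+1 <= m'.+1)%N ->
  forall M : 'I_m'.+1 -> 'M[R[i]]_d, POVM M ->
  exists t : R, robust_feasible n'.+1 M t /\ 1 + t <= m'.+1%:R / n'.+1%:R.
Proof.
move=> nm M [Mp Ms].
case: (eqVneq n' m') => [enm | nnm].
  subst m'; exists 0; split; last by rewrite addr0 divff // pnatr_eq0.
  split => //; exists M; split; first by split.
  exists 1%N, (fun _ => 1), (fun _ => M), (fun _ a b => (a == b)%:R).
  split.
  - by move=> x; exact: ler01.
  - by rewrite big_ord1.
  - by split => // *; exact: ler0n.
  - move=> x a; rewrite (bigD1 a) //= eqxx big1 ?addr0 // => b nb.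
    by rewrite eq_sym (negPf nb).
  - move=> b; rewrite big_ord1 (bigD1 b) //= eqxx mul1r scale1r big1 ?addr0.
      by rewrite invr1 rmorph1 scale1r rmorph0 scale0r addr0.
    by move=> a na; rewrite (negPf na) mulr0n mulr0 rmorph0 scale0r.
have ltnm : (n'.+1 < m'.+1)%N by rewrite ltn_neqAle nm andbT eqSS.
pose g (x c : 'I_m'.+1) : 'I_n'.+1 := inord (minn (val (c - x)) n').
pose h (x : 'I_m'.+1) (a : 'I_n'.+1) : 'I_m'.+1 := x + inord a.
pose Q x a := \sum_(c | g x c == a) M c.
pose q x a b : R := (h x a == b)%:R.
pose p (x : 'I_m'.+1) : R := (m'.+1%:R)^-1.
pose S b := \sum_x \sum_a ((p x * q x a b)%:C%C) *: Q x a.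
pose cst : R[i] := (m'.+1%:R / (m'.+1%:R - n'.+1%:R)).
pose r : R[i] := n'.+1%:R / m'.+1%:R.
pose N b := cst *: (S b - r *: M b).
pose w b c := \sum_x ((p x * q x (g x c) b)%:C%C : R[i]).
have hm0 : (m'.+1%:R : R[i]) != 0 by rewrite pnatr_eq0.
have hn0 : (n'.+1%:R : R[i]) != 0 by rewrite pnatr_eq0.
have hmR : (m'.+1%:R : R) != 0 by rewrite pnatr_eq0.
have hmn : (m'.+1%:R - n'.+1%:R : R[i]) != 0.
  by rewrite subr_eq0 eqr_nat eq_sym eqSS.
have hg (x c : 'I_m'.+1) : (val (c - x)%R < n'.+1)%N -> h x (g x c) = c.
  move=> lt.
  have e1 : minn (val (c - x)) n' = val (c - x) by apply/minn_idPl; rewrite -ltnS.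
  have e2 : nat_of_ord (g x c) = val (c - x).
    by rewrite /g inordK e1 //.
  by rewrite /h e2 inord_val addrC subrK.
have hq (x : 'I_m'.+1) (a : 'I_n'.+1) : \sum_b q x a b = 1.
  rewrite (bigD1 (h x a)) //= /q eqxx big1 ?addr0 // => b nb.
  by rewrite eq_sym (negPf nb).
have hQ (x : 'I_m'.+1) : POVM (Q x).
  split; first by move=> a; apply: psd_sum => c _.
  by rewrite -Ms (partition_big (g x) xpredT).
have hSsum : \sum_b S b = 1%:M.
  rewrite /S exchange_big /=.
  under eq_bigr do rewrite exchange_big /=.
  under eq_bigr do under eq_bigr do rewrite -scaler_suml -rmorph_sum -mulr_sumr hq mulr1.
  under eq_bigr do rewrite -scaler_sumr (proj2 (hQ _)).
  rewrite -scaler_suml -rmorph_sum /p sumr_const card_ord -[_ *+ m'.+1]mulr_natl mulfV //.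
  by rewrite rmorph1 scale1r.
have hS (b : 'I_m'.+1) : S b = \sum_c w b c *: M c.
  rewrite /S /w.
  under [RHS]eq_bigr do rewrite scaler_suml.
  rewrite [RHS]exchange_big /=.
  apply: eq_bigr => x _.
  rewrite [RHS](partition_big (g x) xpredT) //=.
  apply: eq_bigr => a _; rewrite scaler_sumr.
  by apply: eq_big => [c|c /eqP <-].
have hw0 (b c : 'I_m'.+1) : 0 <= w b c.
  by apply: sumr_ge0 => x _; rewrite ler0c mulr_ge0 ?invr_ge0 ?ler0n.
have hwb (b : 'I_m'.+1) : r <= w b b.
  have -> : w b b = (\sum_x p x * q x (g x b) b)%:C%C by rewrite rmorph_sum.
  have -> : r = (n'.+1%:R / m'.+1%:R : R)%:C%C.
    by rewrite rmorphM fmorphV !rmorph_nat.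
  apply: lerC.
  apply: (@le_trans _ _ (\sum_x p x * (val (b - x)%R < n'.+1)%N%:R)).
    rewrite -mulr_sumr mulrC /p; apply: ler_wpM2l; first by rewrite invr_ge0 ler0n.
    rewrite (reindex_inj (subrI b)).
    under eq_bigr do rewrite subKr.
    have cnt : \sum_(j < m'.+1) ((j < n'.+1)%N%:R : R) = n'.+1%:R.
      transitivity (\sum_(j < m'.+1 | (j < n'.+1)%N) (1 : R)).
        by rewrite [RHS]big_mkcond; apply: eq_bigr => j _; case: ifP.
      by rewrite -(big_ord_widen _ (fun _ => (1 : R)) (ltnW ltnm)) sumr_const card_ord.
    rewrite -{1}cnt.
    exact: lexx.
  apply: ler_sum => x _; apply: ler_wpM2l; first by rewrite invr_ge0 ler0n.
  case: ltnP => lt; last by rewrite ler0n.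
  by rewrite /q hg // eqxx.
pose t : R := m'.+1%:R / n'.+1%:R - 1.
exists t; split; last by rewrite /t addrC subrK.
split.
  rewrite /t subr_ge0 ler_pdivlMr ?ltr0n // mul1r ler_nat ltnW //.
exists N; split.
  split.
    move=> b; apply: psdZ.
      by rewrite divr_ge0 ?ler0n // subr_ge0 ler_nat ltnW.
    by rewrite hS; apply: psd_comb.
  rewrite -scaler_sumr sumrB -scaler_sumr hSsum Ms -{1}[1%:M]scale1r -scalerBl scalerA.
  have -> : cst * (1 - r) = 1.
    by rewrite /cst /r; field; rewrite !(addrC 1) !natr1 hm0 hmn.
  by rewrite scale1r.
exists m'.+1, p, Q, q.
split.
- by move=> x; rewrite invr_ge0 ler0n.
- by rewrite /p sumr_const card_ord -[_ *+ m'.+1]mulr_natl mulfV.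
- by split => // *; rewrite /q ler0n.
- exact: hq.
- move=> b.
  have e1 : (((1 + t)^-1)%:C%C : R[i]) = r.
    have -> : (1 + t)^-1 = n'.+1%:R / m'.+1%:R.
      by rewrite /t addrC subrK invfM invrK mulrC.
    by rewrite rmorphM fmorphV !rmorph_nat.
  have e2 : (t%:C%C : R[i]) = m'.+1%:R / n'.+1%:R - 1.
    by rewrite /t rmorphB rmorphM fmorphV !rmorph_nat rmorph1.
  rewrite e1 e2 /N scalerDr !scalerA.
  have -> : r * (m'.+1%:R / n'.+1%:R - 1) * cst = 1.
    by rewrite /cst /r; field; rewrite !(addrC 1) !natr1 hm0 hmn hn0.
  by rewrite scale1r addrC subrK.
Qed.

Theorem proposition1 (R : rcfType) (d n m : nat) :
  (1 <= d)%N -> (1 <= n)%N -> (n <= m)%N ->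
  (* max_M (1 + R_F(M)) <= m/n : every POVM has a feasible t with 1 + t <= m/n *)
  (forall M : 'I_m -> 'M[R[i]]_d, POVM M ->
     exists t : R, robust_feasible n M t /\ 1 + t <= m%:R / n%:R)
  /\
  (* equality when d >= m : some POVM has 1 + t >= m/n for all feasible t *)
  ((m <= d)%N ->
     exists M : 'I_m -> 'M[R[i]]_d, POVM M /\
       forall t : R, robust_feasible n M t -> m%:R / n%:R <= 1 + t).
Proof.
move=> d1 n1 nm; split.
  case: n n1 nm => [//|n'] _ nm.
  case: m nm => [//|m'] nm.
  exact: part1.
move=> md; case: m nm md => [|m'] nm md.
  by case: n n1 nm.
exact: part2.
Qed.
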